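(* Let $R>0$ and let $E\subset\mathbb{R}^d$ be an $R$-supported body. Then $$\bigcap_{a\in\partial E} C^a_{\mathcal{N}_R(E,a)}=(\partial E_R)'_R .$$
   Context: A body is a nonempty closed subset of $\mathbb{R}^d$; $S^{d-1}$ is the unit sphere; $B(x)=\{y:|y-x|<R\}$. For $A\subset\mathbb{R}^d$, $A_R=\{x:\operatorname{dist}(x,A)<R\}$ and $A'_R=\{x:\operatorname{dist}(x,A)\ge R\}$ (with $\emptyset'_R=\mathbb{R}^d$). For a body $A$ and $a\in\partial A$, $\mathcal{N}_R(A,a)=\{v\in S^{d-1}: A\cap B(a+Rv)=\emptyset\}$; $A$ is $R$-supported if $\mathcal{N}_R(A,a)\ne\emptyset$ for all $a\in\partial A$. For a nonempty closed $\mathcal K\subset S^{d-1}$ and $x\in\mathbb{R}^d$, the $R$-cone with vertex $x$ is $C^x_{\mathcal K}=\bigcap_{v\in\mathcal K}(\mathbb{R}^d\setminus B(x+Rv))$, and $C_{\mathcal K}=C^o_{\mathcal K}$. An intersection over an empty index set is $\mathbb{R}^d$. *)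

(* Defs.v *)
(* R^d is modelled as 'rV[R]_d with its standard
   (product = Euclidean) topology; metric notions use the Euclidean norm. *)
From mathcomp Require Import all_boot all_order all_algebra.
From mathcomp Require Import all_classical all_reals all_analysis.
Set Implicit Arguments. Unset Strict Implicit. Unset Printing Implicit Defensive.
Import Order.TTheory GRing.Theory Num.Theory.
Import numFieldNormedType.Exports.
Local Open Scope classical_set_scope.
Local Open Scope ring_scope.

Section Defs.
Variables (R : realType) (d : nat).
Local Notation V := 'rV[R]_d.

Definition enorm (x : V) : R := Num.sqrt (\sum_(i < d) (x ord0 i) ^+ 2).

Definition eball (r : R) (x : V) : set V := [set y | enorm (y - x) < r].

Definition sphere : set V := [set v | enorm v = 1].

Definition body (A : set V) : Prop := A !=set0 /\ closed A.

Definition bdry (A : set V) : set V := closure A `\` interior A.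

(* A_r = {x : dist(x,A) < r}  (dist(x,A) = inf_{a in A} |x - a|, = +oo if A empty) *)
Definition nbhd_lt (r : R) (A : set V) : set V :=
  [set x | exists2 a, A a & enorm (x - a) < r].

(* A'_r = {x : dist(x,A) >= r}, with (emptyset)'_r = R^d *)
Definition nbhd_ge (r : R) (A : set V) : set V :=
  [set x | forall a, A a -> r <= enorm (x - a)].

Definition normals (r : R) (A : set V) (a : V) : set V :=
  [set v | sphere v /\ A `&` eball r (a + r *: v) = set0].

Definition supported (r : R) (A : set V) : Prop :=
  forall a, bdry A a -> normals r A a !=set0.

Definition rcone (r : R) (K : set V) (x : V) : set V :=
  \bigcap_(v in K) ~` eball r (x + r *: v).

End Defs.

(* Main.v *)
Require Import Defs.
From mathcomp Require Import all_boot all_order all_algebra.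
From mathcomp Require Import all_classical all_reals all_analysis.
From mathcomp Require Import ring lra.
Import Order.TTheory GRing.Theory Num.Theory.
Import numFieldNormedType.Exports.
Local Open Scope classical_set_scope.
Local Open Scope ring_scope.
Set Implicit Arguments. Unset Strict Implicit.

Section Aux.
Variables (R : realType) (d : nat).
Local Notation V := 'rV[R]_d.
Implicit Types x y : V.

Let sq x := \sum_(i < d) (x ord0 i) ^+ 2.
Lemma sq_ge0 x : 0 <= sq x.
Proof. by apply: sumr_ge0 => i _; rewrite sqr_ge0. Qed.

Lemma enorm_ge0 x : 0 <= enorm x.
Proof. exact: sqrtr_ge0. Qed.

Lemma enorm_sqr x : enorm x ^+ 2 = sq x.
Proof. by rewrite sqr_sqrtr // sq_ge0. Qed.

Lemma enormZ (t : R) x : enorm (t *: x) = `|t| * enorm x.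
Proof.
rewrite /enorm (eq_bigr (fun i => t ^+ 2 * (x ord0 i) ^+ 2)); last first.
  by move=> i _; rewrite mxE exprMn.
by rewrite -mulr_sumr sqrtrM ?sqr_ge0 // sqrtr_sqr.
Qed.

Lemma enormN x : enorm (- x) = enorm x.
Proof. by rewrite -scaleN1r enormZ normrN normr1 mul1r. Qed.

Lemma enormB x y : enorm (x - y) = enorm (y - x).
Proof. by rewrite -enormN opprB. Qed.

Lemma coord_le_enorm x i : `|x ord0 i| <= enorm x.
Proof.
rewrite -sqrtr_sqr /enorm ler_sqrt ?sq_ge0 // (bigD1 i) //= lerDl.
by apply: sumr_ge0 => j _; rewrite sqr_ge0.
Qed.

Lemma sup_le_enorm x : `|x| <= enorm x.
Proof.
change (mx_norm x <= enorm x); rewrite mx_normrE; apply: bigmax_le; first exact: enorm_ge0.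
by move=> [i j] _ /=; rewrite (ord1 i); exact: coord_le_enorm.
Qed.

Lemma coord_le_sup x i : `|x ord0 i| <= `|x|.
Proof.
change (`|x ord0 i| <= mx_norm x); rewrite mx_normrE.
exact: (le_bigmax _ (fun ij : 'I_1 * 'I_d => `|x ij.1 ij.2|) (ord0, i)).
Qed.

Lemma enorm_le_sup x : enorm x <= d.+1%:R * `|x|.
Proof.
have h0 : 0 <= d.+1%:R * `|x| by rewrite mulr_ge0.
rewrite -(ger0_norm h0) -sqrtr_sqr /enorm ler_wsqrtr //.
apply: (@le_trans _ _ (\sum_(i < d) `|x| ^+ 2)).
  apply: ler_sum => i _; rewrite -real_normK ?num_real //.
  by rewrite lerXn2r ?nnegrE // coord_le_sup.
rewrite sumr_const card_ord exprMn -[_ *+ d]mulr_natl ler_wpM2r ?sqr_ge0 //.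
by rewrite -natrX ler_nat; rewrite expnS; apply: (leq_trans (leqnSn d)); rewrite leq_pmulr.
Qed.

End Aux.

Section Aux2.
Variables (R : realType) (d : nat).
Local Notation V := 'rV[R]_d.
Implicit Types x y : V.

Lemma enorm0_coord x i : enorm x = 0 -> x ord0 i = 0.
Proof.
move=> h; have : \sum_(j < d) (x ord0 j) ^+ 2 = 0 by rewrite -enorm_sqr h expr0n.
move/psumr_eq0P => /(_ (fun j _ => sqr_ge0 _)) /(_ i isT) /eqP.
by rewrite sqrf_eq0 => /eqP.
Qed.

Lemma cauchy_schwarz x y :
  \sum_(i < d) x ord0 i * y ord0 i <= enorm x * enorm y.
Proof.
set A := enorm x; set B := enorm y.
have A0 : 0 <= A by exact: enorm_ge0.
have B0 : 0 <= B by exact: enorm_ge0.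
have [Az|Anz] := eqVneq A 0.
  rewrite Az mul0r big1 // => i _; by rewrite enorm0_coord // mul0r.
have [Bz|Bnz] := eqVneq B 0.
  rewrite Bz mulr0 big1 // => i _; by rewrite (enorm0_coord _ Bz) mulr0.
have AB0 : 0 < A * B by rewrite mulr_gt0 // lt0r ?Anz ?Bnz.
have key : 2 * (A * B) * (\sum_(i < d) x ord0 i * y ord0 i)
   <= 2 * (A * B) * (A * B).
  rewrite mulr_sumr.
  apply: (@le_trans _ _ (\sum_(i < d) ((x ord0 i)^+2 * B^+2 + (y ord0 i)^+2 * A^+2))).
    apply: ler_sum => i _.
    have := sqr_ge0 (x ord0 i * B - y ord0 i * A).
    set a := x ord0 i; set b := y ord0 i => h; nra.
  rewrite big_split /= -!mulr_suml -!enorm_sqr -/A -/B; nra.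
by rewrite -subr_ge0 -(pmulr_rge0 _ (mulr_gt0 (ltr0n _ 2) AB0)) mulrBr subr_ge0.
Qed.

Lemma enormD x y : enorm (x + y) <= enorm x + enorm y.
Proof.
have h0 : 0 <= enorm x + enorm y by rewrite addr_ge0 ?enorm_ge0.
rewrite -(ger0_norm h0) -sqrtr_sqr {1}/enorm ler_wsqrtr //.
have cs := cauchy_schwarz x y.
rewrite (eq_bigr (fun i => (x ord0 i)^+2 + (y ord0 i)^+2 + 2 * (x ord0 i * y ord0 i))); last first.
  by move=> i _; rewrite mxE sqrrD; ring.
rewrite !big_split /= -mulr_sumr -!enorm_sqr.
move: (enorm x) (enorm y) cs => a b cs; nra.
Qed.

End Aux2.

Section Topo.
Variables (R : realType) (d : nat).
Local Notation V := 'rV[R]_d.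
Implicit Types x y : V.

Lemma ball_sup x e z : ball x e z <-> `|x - z| < e.
Proof. by rewrite -ball_normE. Qed.

Lemma nbhs_enorm y (P : set V) :
  (exists2 e, 0 < e & forall z, enorm (y - z) < e -> P z) -> nbhs y P.
Proof.
move=> [e e0 h]; apply/nbhs_ballP; exists (e / d.+1%:R).
  by rewrite /= divr_gt0.
move=> z /ball_sup hz; apply: h.
apply: (le_lt_trans (enorm_le_sup _)).
by rewrite mulrC -ltr_pdivlMr.
Qed.

Lemma enorm_nbhs y (P : set V) :
  nbhs y P -> exists2 e, 0 < e & forall z, enorm (y - z) < e -> P z.
Proof.
move=> /nbhs_ballP [e e0 h]; exists e => // z hz; apply: h; apply/ball_sup.
exact: le_lt_trans (sup_le_enorm _) hz.
Qed.

Lemma closure_enorm (A : set V) y :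
  closure A y <-> forall e, 0 < e -> exists z, A z /\ enorm (y - z) < e.
Proof.
split.
  move=> h e e0.
  have hn : nbhs y [set z | enorm (y - z) < e] by apply: nbhs_enorm; exists e.
  by have [z [Az Bz]] := h _ hn; exists z.
move=> h B /enorm_nbhs [e e0 he]; have [z [Az hz]] := h e e0.
by exists z; split => //; apply: he.
Qed.

Lemma enorm_cont y : continuous (fun t : V => enorm (y - t)).
Proof.
move=> z; apply/(@cvgrPdist_lt _ _ _ (nbhs z) (nbhs_filter z)) => e e0; apply: nbhs_enorm; exists e => // t ht.
have h1 := enormD (y - t) (t - z).
have h2 := enormD (y - z) (z - t).
rewrite (_ : y - t + (t - z) = y - z) in h1; last by rewrite addrA subrK.
rewrite (_ : y - z + (z - t) = y - t) in h2; last by rewrite addrA subrK.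
have e1 : enorm (t - z) = enorm (z - t) := enormB _ _.
rewrite ltr_norml; apply/andP; split; lra.
Qed.

End Topo.

Section Closest.
Variables (R : realType) (d : nat).
Local Notation V := 'rV[R]_d.

Lemma closest (r : R) (E : set V) y : 0 < r -> closed E ->
  closure (nbhd_lt r E) y -> (forall a, E a -> r <= enorm (y - a)) ->
  exists c, E c /\ enorm (y - c) = r.
Proof.
move=> r0 cE /closure_enorm hcl yout.
have [z [[a0 Ea0 hza0] hyz]] := hcl 1 ltr01.
have ha0 : enorm (y - a0) < r + 1.
  have := enormD (y - z) (z - a0); rewrite addrA subrK; lra.
have r10 : 0 < r + 1 by lra.
pose A := E `&` closed_ball y (r + 1).
have hA t : A t <-> E t /\ `|y - t| <= r + 1.
  by rewrite /A closed_ballE.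
have cA : compact A.
  apply: bounded_closed_compact; last first.
    by apply: closedI => //; exact: closed_ball_closed.
  rewrite /= /bounded_near; near=> M => t /hA [_ ht].
  have : `|t| <= `|y| + `|y - t|.
    rewrite {1}(_ : t = y - (y - t)); first exact: ler_normB.
    by rewrite opprB addrC subrK.
  move=> h; apply: (le_trans h); apply: le_trans (lerD (lexx _) ht) _.
  near: M; apply: nbhs_pinfty_ge; exact: num_real.
have A0 : A !=set0.
  exists a0; apply/hA; split => //.
  by apply: ltW; apply: le_lt_trans (sup_le_enorm _) ha0.
have cf : {within A, continuous (fun t : V => enorm (y - t))}.
  by apply: continuous_subspaceT; exact: enorm_cont.
have [c /set_mem Ac cmin] := EVT_min_rV A0 cA cf.
case/hA: Ac => Ec hc; exists c; split => //.
apply/eqP; rewrite eq_le yout // andbT leNgt; apply/negP => hlt.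
have dpos : 0 < enorm (y - c) - r by rewrite subr_gt0.
have [z' [[a' Ea' hza'] hyz']] := hcl (enorm (y - c) - r) dpos.
have hya' : enorm (y - a') < enorm (y - c).
  have := enormD (y - z') (z' - a'); rewrite addrA subrK; lra.
have ca0 : enorm (y - c) <= enorm (y - a0).
  apply: cmin; apply/mem_set/hA; split => //.
  by apply: ltW; apply: le_lt_trans (sup_le_enorm _) ha0.
have : enorm (y - c) <= enorm (y - a').
  apply: cmin; apply/mem_set/hA; split => //.
  apply: ltW; apply: le_lt_trans (sup_le_enorm _) _; lra.
lra.
Unshelve. all: by end_near.
Qed.

End Closest.
Unset Implicit Arguments.

Lemma sub_sc (R : realType) (d : nat) (u w : 'rV[R]_d) (s : R) :
  u - (u + s *: w) = - (s *: w).
Proof. by rewrite opprD addNKr. Qed.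

Theorem mainTheorem11 (R : realType) (d : nat) (r : R) (E : set 'rV[R]_d) :
  0 < r -> body E -> supported r E ->
  \bigcap_(a in bdry E) rcone r (normals r E a) a
  = nbhd_ge r (bdry (nbhd_lt r E)).
Proof.
move=> r0 [_ cE] _.
have EclE a : closure E a -> E a by rewrite -(closure_id E).1.
rewrite eqEsubset; split => x Hx.
- move=> y [ycl yint].
  have yout a : E a -> r <= enorm (y - a).
    move=> Ea; rewrite leNgt; apply/negP => ya; apply: yint.
    apply: nbhs_enorm; exists (r - enorm (y - a)); first by rewrite subr_gt0.
    move=> z hz; exists a => //.
    have := enormD (z - y) (y - a); rewrite addrA subrK [enorm (z - y)]enormB; lra.
  have [c [Ec yc]] := closest r0 cE ycl yout.
  pose v := r^-1 *: (y - c).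
  have yv : c + r *: v = y.
    by rewrite /v scalerA mulfV ?gt_eqF // scale1r addrC subrK.
  have bc : bdry E c.
    split; first exact: subset_closure.
    move/enorm_nbhs => [e e0 he].
    pose s := e / (e + r).
    have s0 : 0 < s by rewrite divr_gt0 // addr_gt0.
    have s1 : s < 1 by rewrite ltr_pdivrMr ?addr_gt0 // mul1r; lra.
    have sr : s * r < e.
      by rewrite /s mulrAC ltr_pdivrMr ?addr_gt0 // mulrDr; nra.
    have Ep : E (c + s *: (y - c)).
      by apply: he; rewrite sub_sc enormN enormZ gtr0_norm // yc.
    have := yout _ Ep.
    rewrite (_ : y - (c + s *: (y - c)) = (1 - s) *: (y - c)); last first.
      by rewrite scalerBl scale1r opprD addrA.
    rewrite enormZ gtr0_norm ?subr_gt0 // yc; nra.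
  have nv : normals r E c v.
    split.
      by rewrite /sphere /= /v enormZ gtr0_norm ?invr_gt0 // yc mulVf ?gt_eqF.
    rewrite yv; apply/seteqP; split => // z [Ez hz].
    by move: (yout _ Ez); rewrite enormB leNgt hz.
  have := Hx c bc v nv; rewrite yv /= /eball /= => hxy.
  by rewrite leNgt; apply/negP.
- move=> a ba v [sv nv]; rewrite /= /eball /= => hx.
  have Ea : E a by apply: EclE; case: ba.
  set y := a + r *: v.
  have yout z : E z -> r <= enorm (y - z).
    move=> Ez; rewrite enormB leNgt; apply/negP => hz.
    have : (E `&` eball r y) z by split.
    by rewrite nv.
  have ev : enorm v = 1 by [].
  have : bdry (nbhd_lt r E) y.
    split.
      apply/closure_enorm => e e0.
      pose m := Num.min e r.
      have m0 : 0 < m by rewrite lt_min e0 r0.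
      have me : m <= e by rewrite ge_min lexx.
      have mr : m <= r by rewrite ge_min lexx orbT.
      exists (a + (r - m / 2) *: v); split.
        exists a => //.
        rewrite addrAC subrr add0r enormZ ev mulr1 ger0_norm; lra.
      rewrite /y opprD addrA (addrC a) addrK -scalerBl enormZ ev mulr1.
      rewrite ger0_norm; lra.
    move/nbhs_singleton => [z Ez hz].
    by move: (yout _ Ez); rewrite leNgt hz.
  move/Hx; rewrite leNgt hx //.
Qed.
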